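(* Consider a multi-sender single-uniprior index-coding instance with binary messages, information-flow graph $\mathcal{G}$ and message graph $\mathcal{U}$, and let $\mathcal{V}_S$ be the vertex set of a message-disconnected leaf SCC of $\mathcal{G}$. Form $(\mathcal{G}',\mathcal{U}')$ by appending this leaf SCC: add a new dummy vertex $n+1$ to both $\mathcal{G}$ and $\mathcal{U}$ (isolated in $\mathcal{U}'$), representing a receiver whose prior message $x_{n+1}$ is the constant $0$ (known to all receivers and never transmitted), and add an arc $(v\to n+1)$ in $\mathcal{G}$ for an arbitrarily chosen $v\in\mathcal{V}_S$ (so the dummy receiver requests $x_v$); the senders are unchanged. Then \[ N_{\mathrm{SCC}}(\mathcal{G}') = N_{\mathrm{SCC}}(\mathcal{G})-1,\qquad \tilde{\ell}^*(\mathcal{G}',\mathcal{U}')=\tilde{\ell}^*(\mathcal{G},\mathcal{U}),\qquad V_{\mathrm{out}}(\mathcal{G}')=V_{\mathrm{out}}(\mathcal{G}), \] where $N_{\mathrm{SCC}}(\cdot)$ denotes the number of leaf SCCs.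
   Context: Multi-sender single-uniprior index coding with binary messages: there are $n$ receivers and $n$ independent messages $x_1,\dots,x_n$, each a single bit uniformly distributed on $\{0,1\}$. Receiver $i$ knows $x_i$ a priori and requests a set of messages not containing $x_i$. The information-flow graph is the directed graph $\mathcal{G}=(\mathcal{V},\mathcal{A})$, $\mathcal{V}=\{1,\dots,n\}$, with an arc $(j\to i)$ iff receiver $i$ requests $x_j$. There are $S$ senders; sender $s$ knows a subset $\mathcal{M}_s$ of the messages, and every message is known to some sender. An index code consists of, for each sender $s$, an encoding function mapping the messages in $\mathcal{M}_s$ to $\ell_s$ bits, and for each receiver $i$ a decoding function that, from all senders' outputs together with its prior message, returns every message requested by $i$, for all message values; its length is $\sum_s \ell_s$. $\tilde{\ell}^*(\mathcal{G},\mathcal{U})$ is the minimum length of an index code for the instance. The message graph $\mathcal{U}$ is the undirected graph on $\mathcal{V}$ with an edge $\{i,j\}$ iff some sender knows both $x_i$ and $x_j$. A leaf vertex of $\mathcal{G}$ has no outgoing arcs; $V_{\mathrm{out}}(\mathcal{G})$ is the number of non-leaf vertices. A leaf SCC of $\mathcal{G}$ is a strongly connected component with at least two vertices and no arc from it to a vertex outside it. A leaf SCC with vertex set $\mathcal{V}_S$ is message-disconnected iff there are two vertices in $\mathcal{V}_S$ that are not joined by any path in $\mathcal{U}$. *)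

(* Defs.v *)
From mathcomp Require Import all_boot.
From Stdlib Require Import ClassicalEpsilon.
Set Implicit Arguments. Unset Strict Implicit. Unset Printing Implicit Defensive.

(* An instance on N vertices/receivers 'I_N with S senders:
   - G : rel 'I_N, the information-flow graph: G j i  <=> arc (j -> i) <=> receiver i requests x_j.
   - M : 'I_S -> {set 'I_N}, M s = set of messages known to sender s.
   - Z : {set 'I_N}, messages that are the constant 0 (known to everyone,
         never transmitted); Z = set0 for an ordinary instance. *)

Definition zero_on N (Z : {set 'I_N}) (x : {ffun 'I_N -> bool}) : Prop :=
  forall j, j \in Z -> x j = false.

Definition is_index_code N S (G : rel 'I_N) (M : 'I_S -> {set 'I_N})
    (Z : {set 'I_N}) (l : 'I_S -> nat) : Prop :=
  exists (E : forall s : 'I_S, {ffun 'I_N -> bool} -> {ffun 'I_(l s) -> bool})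
         (D : 'I_N -> (forall s : 'I_S, {ffun 'I_(l s) -> bool}) -> bool -> 'I_N -> bool),
    (forall s x y, zero_on Z x -> zero_on Z y ->
        (forall j, j \in M s -> x j = y j) -> E s x = E s y) /\
    (forall x, zero_on Z x ->
        forall i j, G j i -> D i (fun s => E s x) (x i) j = x j).

Definition achievable N S (G : rel 'I_N) (M : 'I_S -> {set 'I_N}) (Z : {set 'I_N})
    (L : nat) : Prop :=
  exists l : 'I_S -> nat, \sum_(s < S) l s = L /\ is_index_code G M Z l.

Definition achievableb N S (G : rel 'I_N) (M : 'I_S -> {set 'I_N}) (Z : {set 'I_N})
    (L : nat) : bool :=
  if excluded_middle_informative (achievable G M Z L) then true else false.

Lemma achievableb_ex N S (G : rel 'I_N) (M : 'I_S -> {set 'I_N}) (Z : {set 'I_N}) :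
  (exists L, achievable G M Z L) -> exists L, achievableb G M Z L.
Proof.
case=> L HL; exists L; rewrite /achievableb.
by case: excluded_middle_informative.
Qed.

(* Minimum length of an index code (0 by convention if no code exists,
   which never happens when every non-constant message is known to some sender). *)
Definition opt_len N S (G : rel 'I_N) (M : 'I_S -> {set 'I_N}) (Z : {set 'I_N}) : nat :=
  match excluded_middle_informative (exists L, achievable G M Z L) with
  | left h => ex_minn (achievableb_ex h)
  | right _ => 0
  end.

Definition msg_adj N S (M : 'I_S -> {set 'I_N}) : rel 'I_N :=
  fun i j => [exists s, (i \in M s) && (j \in M s)].

Definition is_scc N (G : rel 'I_N) (C : {set 'I_N}) : bool :=
  [&& C != set0,
      [forall x in C, forall y in C, connect G x y] &
      [forall x in C, forall y, (connect G x y && connect G y x) ==> (y \in C)]].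

Definition is_leaf_scc N (G : rel 'I_N) (C : {set 'I_N}) : bool :=
  [&& is_scc G C, 1 < #|C| &
      [forall x in C, forall y, G x y ==> (y \in C)]].

Definition N_leaf_scc N (G : rel 'I_N) : nat :=
  #|[set C : {set 'I_N} | is_leaf_scc G C]|.

Definition V_out N (G : rel 'I_N) : nat :=
  #|[set i : 'I_N | [exists j, G i j]]|.

Definition msg_disconnected N S (M : 'I_S -> {set 'I_N}) (C : {set 'I_N}) : Prop :=
  exists i j, [/\ i \in C, j \in C & ~~ connect (msg_adj M) i j].

(* G' : G on 'I_n embedded via lift ord_max, plus the new vertex n (= ord_max,
   the paper's n+1) with the single arc v -> n. *)
Definition append_dummy n (G : rel 'I_n) (v : 'I_n) : rel 'I_n.+1 :=
  fun a b =>
    match unlift ord_max a, unlift ord_max b with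
    | Some a', Some b' => G a' b'
    | Some a', None => a' == v
    | None, _ => false
    end.

Definition lift_known n S (M : 'I_S -> {set 'I_n}) : 'I_S -> {set 'I_n.+1} :=
  fun s => [set lift ord_max j | j in M s].

(* Main.v *)
Require Import Defs.
From mathcomp Require Import all_boot.
From Stdlib Require Import ClassicalEpsilon FunctionalExtensionality.
Set Implicit Arguments. Unset Strict Implicit. Unset Printing Implicit Defensive.

Notation lf := (lift ord_max).

Lemma G'_ll n (G : rel 'I_n) v a b : append_dummy G v (lf a) (lf b) = G a b.
Proof. by rewrite /append_dummy !liftK. Qed.
Lemma G'_lm n (G : rel 'I_n) v a : append_dummy G v (lf a) ord_max = (a == v).
Proof. by rewrite /append_dummy liftK unlift_none. Qed.
Lemma G'_m n (G : rel 'I_n) v y : append_dummy G v ord_max y = false.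
Proof. by rewrite /append_dummy unlift_none. Qed.

Lemma lf_neq n (a : 'I_n) : (lf a == ord_max) = false.
Proof. by rewrite eq_sym (negbTE (neq_lift _ _)). Qed.

Lemma connect_m n (G : rel 'I_n) v y :
  connect (append_dummy G v) ord_max y = (y == ord_max).
Proof.
apply/idP/eqP; last by move->; exact: connect0.
by case/connectP => [[|c p]] /=; [move=> _ -> | rewrite G'_m].
Qed.

Lemma connect_lift n (G : rel 'I_n) v a b :
  connect (append_dummy G v) (lf a) (lf b) = connect G a b.
Proof.
apply/idP/idP.
- case/connectP => p; elim: p a => [|c p IH] a /=.
    by move=> _ /lift_inj ->.
  case/andP; case: (unliftP ord_max c) => [c'|] ->.
    rewrite G'_ll => e pth Hl; exact: connect_trans (connect1 e) (IH _ pth Hl).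
  move=> _; case: p {IH} => [|d p] /=; last by rewrite G'_m.
  by move=> _ /eqP; rewrite lf_neq.
- case/connectP => p; elim: p a => [|c p IH] a /=.
    by move=> _ ->; exact: connect0.
  case/andP => e pth Hl.
  by apply: connect_trans (connect1 _) (IH _ pth Hl); rewrite G'_ll.
Qed.

Lemma mem_lift n (C : {set 'I_n}) a : (lf a \in lf @: C) = (a \in C).
Proof. by rewrite mem_imset //; exact: lift_inj. Qed.

Lemma max_notin_lift n (C : {set 'I_n}) : (ord_max \in lf @: C) = false.
Proof. by apply/imsetP => [[x _ /eqP]]; rewrite eq_sym lf_neq. Qed.

Lemma scc_lift n (G : rel 'I_n) v (C : {set 'I_n}) :
  is_scc (append_dummy G v) (lf @: C) = is_scc G C.
Proof.
rewrite /is_scc imset_eq0; congr (_ && (_ && _)).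
- apply/idP/idP.
  + move/forall_inP => H; apply/forall_inP => x xC; apply/forall_inP => y yC.
    have /forall_inP := H (lf x) ltac:(by rewrite mem_lift).
    by move/(_ (lf y)); rewrite mem_lift connect_lift; apply.
  + move/forall_inP => H; apply/forall_inP => _ /imsetP[x xC ->].
    apply/forall_inP => _ /imsetP[y yC ->]; rewrite connect_lift.
    by move/forall_inP: (H x xC); apply.
- apply/idP/idP.
  + move/forall_inP => H; apply/forall_inP => x xC; apply/forallP => y.
    have /forallP := H (lf x) ltac:(by rewrite mem_lift).
    by move/(_ (lf y)); rewrite !connect_lift mem_lift.
  + move/forall_inP => H; apply/forall_inP => _ /imsetP[x xC ->].
    apply/forallP => y'; case: (unliftP ord_max y') => [y|] ->.
      by rewrite !connect_lift mem_lift; move/forallP: (H x xC).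
    by rewrite connect_m lf_neq andbF.
Qed.

Lemma leaf_lift n (G : rel 'I_n) v (C : {set 'I_n}) :
  is_leaf_scc (append_dummy G v) (lf @: C) = is_leaf_scc G C && (v \notin C).
Proof.
rewrite /is_leaf_scc scc_lift card_imset; last exact: lift_inj.
case: (is_scc G C) => //=; case: (1 < #|C|) => //=.
apply/idP/andP.
- move/forall_inP => H; split.
    apply/forall_inP => x xC; apply/forallP => y.
    have /forallP := H (lf x) ltac:(by rewrite mem_lift).
    by move/(_ (lf y)); rewrite G'_ll mem_lift.
  apply/negP => vC; have /forallP := H (lf v) ltac:(by rewrite mem_lift).
  by move/(_ ord_max); rewrite G'_lm eqxx max_notin_lift.
- case=> /forall_inP H vC; apply/forall_inP => _ /imsetP[x xC ->].
  apply/forallP => y'; case: (unliftP ord_max y') => [y|] ->.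
    by rewrite G'_ll mem_lift; move/forallP: (H x xC).
  rewrite G'_lm max_notin_lift; apply/implyP => /eqP Ex.
  by move: vC; rewrite -Ex xC.
Qed.

Lemma two_elems (T : finType) (C : {set T}) x :
  1 < #|C| -> exists2 y, y \in C & y != x.
Proof.
move=> H; case: (boolP [exists y in C, y != x]).
  by case/exists_inP => y; exists y.
move/exists_inPn => H2.
have : C \subset [set x].
  by apply/subsetP => y yC; rewrite inE; move: (H2 y yC); rewrite negbK.
by move/subset_leq_card; rewrite cards1 leqNgt H.
Qed.

Lemma leaf_no_max n (G : rel 'I_n) v C' :
  is_leaf_scc (append_dummy G v) C' -> ord_max \notin C'.
Proof.
case/and3P => /and3P[_ /forall_inP Hc _] H1 _; apply/negP => mC.
have [y yC ny] := two_elems ord_max H1.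
have /forall_inP := Hc _ mC; move/(_ y yC).
by rewrite connect_m (negbTE ny).
Qed.

Lemma scc_conn n (G : rel 'I_n) C x y :
  is_scc G C -> x \in C -> y \in C -> connect G x y.
Proof.
by case/and3P => _ /forall_inP H _ xC yC; move/forall_inP: (H x xC); apply.
Qed.

Lemma scc_unique n (G : rel 'I_n) C D x :
  is_scc G C -> is_scc G D -> x \in C -> x \in D -> C = D.
Proof.
have key : forall C D, is_scc G C -> is_scc G D -> x \in C -> x \in D ->
    C \subset D.
  move=> C1 D1 HC HD xC xD; apply/subsetP => y yC.
  case/and3P: HD => _ _ /forall_inP/(_ x xD)/forallP/(_ y)/implyP; apply.
  by rewrite !(scc_conn HC).
move=> HC HD xC xD; apply/eqP; rewrite eqEsubset.
by rewrite (key C D) // (key D C).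
Qed.

Lemma leaf_out n (G : rel 'I_n) VS v :
  is_leaf_scc G VS -> v \in VS -> exists w, G v w.
Proof.
move=> /and3P[Hs H1 _] vV; have [w wV nw] := two_elems v H1.
case/connectP: (scc_conn Hs vV wV) => [[|c p]] /=.
  by move=> _ E; rewrite E eqxx in nw.
by case/andP => e _ _; exists c.
Qed.

Lemma Nleaf_part n (G : rel 'I_n) VS v :
  is_leaf_scc G VS -> v \in VS ->
  N_leaf_scc (append_dummy G v) = N_leaf_scc G - 1.
Proof.
move=> HV vV; rewrite /N_leaf_scc.
set A := [set C | is_leaf_scc G C].
have -> : [set C' | is_leaf_scc (append_dummy G v) C'] =
          (fun C : {set 'I_n} => lf @: C) @: (A :\ VS).
  apply/setP => C'; rewrite inE; apply/idP/imsetP.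
  - move=> H; have nm := leaf_no_max H.
    set C := [set a | lf a \in C'].
    have EC : C' = lf @: C.
      apply/setP => y; case: (unliftP ord_max y) => [a|] ->.
        by rewrite mem_lift inE.
      by rewrite max_notin_lift (negbTE nm).
    rewrite EC leaf_lift in H; case/andP: H => HC vC.
    exists C => //; rewrite in_setD1 inE HC andbT.
    by apply: contraNneq vC => ->.
  - case=> C; rewrite in_setD1 inE => /andP[CV HC] ->.
    rewrite leaf_lift HC /=; apply/negP => vC; apply: (negP CV); apply/eqP.
    have [HsC _ _] := and3P HC; have [HsV _ _] := and3P HV.
    exact: (scc_unique HsC HsV vC vV).
rewrite card_imset; last exact: imset_inj lift_inj.
by rewrite (cardsD1 VS A) inE HV /= add1n subn1.
Qed.

Lemma Vout_part n (G : rel 'I_n) VS v :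
  is_leaf_scc G VS -> v \in VS ->
  V_out (append_dummy G v) = V_out G.
Proof.
move=> HV vV; rewrite /V_out.
have -> : [set i | [exists j, append_dummy G v i j]] =
          lf @: [set i | [exists j, G i j]].
  apply/setP => y; case: (unliftP ord_max y) => [a|] ->.
    rewrite mem_lift !inE; apply/existsP/existsP => [[j']|[j Hj]].
      case: (unliftP ord_max j') => [b|] ->; first by rewrite G'_ll; exists b.
      by rewrite G'_lm => /eqP ->; apply: leaf_out HV vV.
    by exists (lf j); rewrite G'_ll.
  by rewrite max_notin_lift inE; apply/existsP => [[j]]; rewrite G'_m.
by rewrite card_imset //; exact: lift_inj.
Qed.

Lemma zero0 N (x : {ffun 'I_N -> bool}) : zero_on set0 x.
Proof. by move=> k; rewrite inE. Qed.

Lemma det_lemma n S (G : rel 'I_n) (M : 'I_S -> {set 'I_n}) (l : 'I_S -> nat)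
  (E : forall s : 'I_S, {ffun 'I_n -> bool} -> {ffun 'I_(l s) -> bool})
  (D : 'I_n -> (forall s : 'I_S, {ffun 'I_(l s) -> bool}) -> bool -> 'I_n -> bool)
  (Henc : forall s x y, zero_on set0 x -> zero_on set0 y ->
        (forall j, j \in M s -> x j = y j) -> E s x = E s y)
  (Hdec : forall x, zero_on set0 x ->
        forall i j, G j i -> D i (fun s => E s x) (x i) j = x j)
  VS (HV : is_leaf_scc G VS) (Hdisc : msg_disconnected M VS) v (vV : v \in VS)
  x y (Hxy : (fun s => E s x) = (fun s => E s y)) : x v = y v.
Proof.
have Hs : is_scc G VS by case/and3P: HV.
have prop : forall x y : {ffun 'I_n -> bool}, (fun s => E s x) = (fun s => E s y) ->
    forall a b, connect G a b -> x b = y b -> x a = y a.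
  move=> x1 y1 H a b /connectP[p pth ->]; elim: p a pth => [|c p IH] a //=.
  case/andP => Gac pth Hl; have Hc := IH c pth Hl.
  by rewrite -(Hdec x1 (zero0 _) c a Gac) -(Hdec y1 (zero0 _) c a Gac) Hc H.
case: (boolP (x v == y v)) => [/eqP //| Hne]; exfalso.
have dis : forall d, d \in VS -> x d != y d.
  move=> d dV; apply: contra Hne => /eqP Hd; apply/eqP.
  exact: (prop x y Hxy v d (scc_conn Hs vV dV) Hd).
case: Hdisc => i [j [iV jV nc]].
pose z := [ffun k => if connect (msg_adj M) i k then x k else y k].
have Hz : (fun s => E s z) = (fun s => E s x).
  apply: functional_extensionality_dep => s.
  case: (boolP [exists k in M s, connect (msg_adj M) i k]).
    case/exists_inP => k kM cik; apply: Henc; try exact: zero0.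
    move=> k' k'M; rewrite ffunE.
    have -> // : connect (msg_adj M) i k'.
    apply: connect_trans cik (connect1 _).
    by apply/existsP; exists s; rewrite kM k'M.
  move/exists_inPn => H.
  transitivity (E s y).
    apply: Henc; try exact: zero0.
    by move=> k' k'M; rewrite ffunE (negbTE (H k' k'M)).
  by have := f_equal (fun f : (forall s, {ffun 'I_(l s) -> bool}) => f s) Hxy.
have zi : z i = x i by rewrite ffunE connect0.
have := prop z x Hz j i (scc_conn Hs jV iV) zi.
rewrite ffunE (negbTE nc) => E'.
by move: (dis j jV); rewrite E' eqxx.
Qed.

Lemma achievablebP N S (G : rel 'I_N) (M : 'I_S -> {set 'I_N}) Z L :
  achievableb G M Z L <-> achievable G M Z L.
Proof. by rewrite /achievableb; case: excluded_middle_informative. Qed.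

Lemma opt_len_eq N1 N2 S (G1 : rel 'I_N1) (M1 : 'I_S -> {set 'I_N1}) Z1
  (G2 : rel 'I_N2) (M2 : 'I_S -> {set 'I_N2}) Z2 :
  (forall L, achievable G1 M1 Z1 L <-> achievable G2 M2 Z2 L) ->
  opt_len G1 M1 Z1 = opt_len G2 M2 Z2.
Proof.
move=> H; rewrite /opt_len.
case: excluded_middle_informative => h1; case: excluded_middle_informative => h2.
- case: ex_minnP => m1 H1 Min1; case: ex_minnP => m2 H2 Min2.
  apply/eqP; rewrite eqn_leq Min1 ?Min2 //; apply/achievablebP.
    by apply/H/achievablebP.
  by apply/H/achievablebP.
- by exfalso; apply: h2; case: h1 => L /H; exists L.
- by exfalso; apply: h1; case: h2 => L /H; exists L.
- by [].
Qed.

Lemma ach_equiv n S (G : rel 'I_n) (M : 'I_S -> {set 'I_n})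
  VS (HV : is_leaf_scc G VS) (Hdisc : msg_disconnected M VS) v (vV : v \in VS) L :
  achievable (append_dummy G v) (lift_known M) [set ord_max] L <->
  achievable G M set0 L.
Proof.
split.
- case=> l [sum [E [D [Henc Hdec]]]]; exists l; split => //.
  pose ext (x : {ffun 'I_n -> bool}) : {ffun 'I_n.+1 -> bool} :=
    [ffun k => if unlift ord_max k is Some k' then x k' else false].
  have zext : forall x, zero_on [set ord_max] (ext x).
    by move=> x j; rewrite inE => /eqP ->; rewrite ffunE unlift_none.
  exists (fun s x => E s (ext x)), (fun i out b j => D (lf i) out b (lf j)).
  split.
  + move=> s x y _ _ Hxy; apply: Henc => //.
    by move=> _ /imsetP[k kM ->]; rewrite !ffunE liftK; apply: Hxy.
  + move=> x _ i j Gji.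
    have := Hdec (ext x) (zext x) (lf i) (lf j); rewrite G'_ll => /(_ Gji).
    by rewrite !ffunE !liftK.
- case=> l [sum [E [D [Henc Hdec]]]]; exists l; split => //.
  pose res (x : {ffun 'I_n.+1 -> bool}) : {ffun 'I_n -> bool} :=
    [ffun k => x (lf k)].
  pose dummy (out : forall s : 'I_S, {ffun 'I_(l s) -> bool}) : bool :=
    match excluded_middle_informative (exists x, (fun s => E s x) = out) with
    | left h => (proj1_sig (constructive_indefinite_description _ h)) v
    | right _ => false end.
  exists (fun s x => E s (res x)),
    (fun i' out b j' => if unlift ord_max i' is Some i then
        (if unlift ord_max j' is Some j then D i out b j else false)
      else dummy out).
  split.
  + move=> s x y _ _ Hxy; apply: Henc; try exact: zero0.
    by move=> j jM; rewrite !ffunE; apply: Hxy; rewrite /lift_known mem_imset //; exact: lift_inj.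
  + move=> x _ i' j'.
    case: (unliftP ord_max i') => [i|] ->; case: (unliftP ord_max j') => [j|] ->;
      rewrite ?G'_ll ?G'_lm ?G'_m ?liftK ?unlift_none //.
    * move=> Gji; have := Hdec (res x) (zero0 _) i j Gji.
      by rewrite !ffunE.
    * move=> /eqP ->; rewrite /dummy; case: excluded_middle_informative => h; last first.
        by exfalso; apply: h; exists (res x).
      case: (constructive_indefinite_description _ h) => y /= Hy.
      have := det_lemma Henc Hdec HV Hdisc vV Hy.
      by rewrite ffunE.
Qed.

Theorem proposition1 (n S : nat) (G : rel 'I_n) (M : 'I_S -> {set 'I_n})
    (G_irr : irreflexive G)
    (M_cover : forall j : 'I_n, exists s : 'I_S, j \in M s)
    (VS : {set 'I_n}) (VS_leaf : is_leaf_scc G VS)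
    (VS_disc : msg_disconnected M VS)
    (v : 'I_n) (v_in : v \in VS) :
  N_leaf_scc (append_dummy G v) = N_leaf_scc G - 1
  /\ opt_len (append_dummy G v) (lift_known M) [set ord_max] = opt_len G M set0
  /\ V_out (append_dummy G v) = V_out G.
Proof.
split; first exact: Nleaf_part VS_leaf v_in.
split; last exact: Vout_part VS_leaf v_in.
apply: opt_len_eq => L; exact (ach_equiv VS_leaf VS_disc v_in L).
Qed.
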